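(* Every threshold graph is edge simplicial and co-edge simplicial. Moreover, there exists a graph that is edge simplicial and co-edge simplicial but not threshold.
   Context: A graph is threshold if it has no induced subgraph isomorphic to $2K_2$, $C_4$ or $P_4$ (equivalently, its vertex set partitions into a stable set $I$ and a clique $K$ such that the vertices of $I$ can be ordered $u_1,\dots,u_k$ with $N(u_1)\subseteq\cdots\subseteq N(u_k)$). A clique $C$ is simplicial if $C=N[v]$ for some vertex $v$; a graph is edge simplicial if every edge lies in a simplicial clique, and co-edge simplicial if its complement is edge simplicial. *)

(* Defs.v *)
From mathcomp Require Import all_boot.
Set Implicit Arguments. Unset Strict Implicit. Unset Printing Implicit Defensive.

Definition simple_graph (T : finType) (e : rel T) : Prop :=
  irreflexive e /\ symmetric e.

Definition compl_graph (T : finType) (e : rel T) : rel T :=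
  fun x y => (x != y) && ~~ e x y.

Definition closed_nbhd (T : finType) (e : rel T) (v : T) : {set T} :=
  [set u | (u == v) || e v u].

Definition is_clique (T : finType) (e : rel T) (C : {set T}) : Prop :=
  forall x y, x \in C -> y \in C -> x != y -> e x y.

Definition simplicial_clique (T : finType) (e : rel T) (C : {set T}) : Prop :=
  is_clique e C /\ exists v, C = closed_nbhd e v.

Definition edge_simplicial (T : finType) (e : rel T) : Prop :=
  forall x y, e x y -> exists C : {set T}, simplicial_clique e C /\ x \in C /\ y \in C.

Definition co_edge_simplicial (T : finType) (e : rel T) : Prop :=
  edge_simplicial (compl_graph e).

Definition has_induced_2K2 (T : finType) (e : rel T) : Prop :=
  exists a b c d : T, uniq [:: a; b; c; d] /\
    e a b /\ e c d /\ ~~ e a c /\ ~~ e a d /\ ~~ e b c /\ ~~ e b d.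

Definition has_induced_C4 (T : finType) (e : rel T) : Prop :=
  exists a b c d : T, uniq [:: a; b; c; d] /\
    e a b /\ e b c /\ e c d /\ e d a /\ ~~ e a c /\ ~~ e b d.

Definition has_induced_P4 (T : finType) (e : rel T) : Prop :=
  exists a b c d : T, uniq [:: a; b; c; d] /\
    e a b /\ e b c /\ e c d /\ ~~ e a c /\ ~~ e b d /\ ~~ e a d.

Definition threshold (T : finType) (e : rel T) : Prop :=
  ~ has_induced_2K2 e /\ ~ has_induced_C4 e /\ ~ has_induced_P4 e.

(* Main.v *)
Require Import Defs.
From mathcomp Require Import all_boot.
Set Implicit Arguments. Unset Strict Implicit. Unset Printing Implicit Defensive.

Section Gen.
Variable T : finType.
Variable e : rel T.
Hypothesis Hs : simple_graph e.
Hypothesis Ht : threshold e.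

Lemma irr x : e x x = false.
Proof. by case: Hs => H _; apply: H. Qed.
Lemma sym x y : e x y = e y x.
Proof. by case: Hs => _ H; apply: H. Qed.

Lemma vic u w a b : u != w -> e u a -> a != w -> ~~ e w a -> e w b -> b != u ->
  ~~ e u b -> False.
Proof.
move=> uw ua aw wa wb bu ub.
have au : a != u by apply/eqP=> E; move: ua; rewrite E irr.
have bw : b != w by apply/eqP=> E; move: wb; rewrite E irr.
have ab : a != b by apply/eqP=> E; move: wa; rewrite E wb.
have ua_ : u != a by rewrite eq_sym.
have wu_ : w != u by rewrite eq_sym.
have ub_ : u != b by rewrite eq_sym.
have wa_ : w != a by rewrite eq_sym.
have ba_ : b != a by rewrite eq_sym.
have wb_ : w != b by rewrite eq_sym.
have au_e : e a u by rewrite sym.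
have bw_e : e b w by rewrite sym.
have aw' : ~~ e a w by rewrite sym.
have bu' : ~~ e b u by rewrite sym.
case: Ht => [H2 [H4 HP]].
case euw: (e u w); case eab: (e a b);
  have ewu : e w u = e u w by rewrite sym.
all: have eba : e b a = e a b by rewrite sym.
all: rewrite ?euw ?eab in ewu eba.
- apply: H4; exists u, a, b, w.
  rewrite /= !inE !negb_or ?uw ?ua_ ?ub_ ?au ?ab ?aw ?bu ?ba_ ?bw ?wu_ ?wa_ ?wb_ ?ua ?wb ?au_e ?bw_e ?aw' ?wa ?ub ?bu' ?euw ?eab ?ewu ?eba.
  by repeat split.
- apply: HP; exists a, u, w, b.
  rewrite /= !inE !negb_or ?uw ?ua_ ?ub_ ?au ?ab ?aw ?bu ?ba_ ?bw ?wu_ ?wa_ ?wb_ ?ua ?wb ?au_e ?bw_e ?aw' ?wa ?ub ?bu' ?euw ?eab ?ewu ?eba.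
  by repeat split.
- apply: HP; exists u, a, b, w.
  rewrite /= !inE !negb_or ?uw ?ua_ ?ub_ ?au ?ab ?aw ?bu ?ba_ ?bw ?wu_ ?wa_ ?wb_ ?ua ?wb ?au_e ?bw_e ?aw' ?wa ?ub ?bu' ?euw ?eab ?ewu ?eba.
  by repeat split.
- apply: H2; exists u, a, w, b.
  rewrite /= !inE !negb_or ?uw ?ua_ ?ub_ ?au ?ab ?aw ?bu ?ba_ ?bw ?wu_ ?wa_ ?wb_ ?ua ?wb ?au_e ?bw_e ?aw' ?wa ?ub ?bu' ?euw ?eab ?ewu ?eba.
  by repeat split.
Qed.

Lemma inN v p : (p \in closed_nbhd e v) = (p == v) || e v p.
Proof. by rewrite inE. Qed.

Lemma vN v : v \in closed_nbhd e v.
Proof. by rewrite inN eqxx. Qed.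

Lemma Nsym p q : (p \in closed_nbhd e q) = (q \in closed_nbhd e p).
Proof. by rewrite !inN eq_sym sym. Qed.

Lemma es : edge_simplicial e.
Proof.
move=> x y exy.
pose S := [set v | (x \in closed_nbhd e v) && (y \in closed_nbhd e v)].
have xS : x \in S by rewrite inE !inN eqxx exy orbT.
case: (arg_minnP (fun v => #|closed_nbhd e v|) xS) => v vS vmin.
have key : forall w, w \in S -> w \in closed_nbhd e v ->
    forall p, p \in closed_nbhd e v -> p \in closed_nbhd e w.
  move=> w wS wv p pv; apply/negPn/negP=> pw.
  case: (eqVneq w v) => [E|wnv]; first by rewrite E pv in pw.
  move: wv; rewrite inN (negbTE wnv) /= => evw.
  have pnv : p != v.
    by apply/eqP=> E; move: pw; rewrite E inN sym evw orbT.
  move: pv; rewrite inN (negbTE pnv) /= => evp.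
  move: pw; rewrite inN negb_or => /andP [pnw nwp].
  have sub : closed_nbhd e w \proper closed_nbhd e v.
    apply/properP; split; last by exists p; [rewrite inN evp orbT | rewrite inN negb_or pnw].
    apply/subsetP=> c; rewrite !inN; case: eqP=> [->|/eqP cw] /=; first by rewrite evw orbT.
    move=> ewc; case: (eqVneq c v) => [//|cv] /=.
    apply/negPn/negP=> nvc.
    have vnw : v != w by rewrite eq_sym.
    exact: (vic vnw evp pnw nwp ewc cv nvc).
  move: (vmin w wS); rewrite leqNgt => /negP; apply; exact: proper_card.
have vS' : v \in S by exact: vS.
move: (vS'); rewrite inE => /andP [xv yv].
exists (closed_nbhd e v); split; last by [].
split; last by exists v.
move=> p q pv qv pq.
have yS : y \in S by rewrite inE !inN eqxx sym exy orbT.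
have pS : p \in S.
  by rewrite inE -!(Nsym p) (key x xS xv p pv) (key y yS yv p pv).
have := key p pS pv q qv; rewrite inN eq_sym (negbTE pq) /= => H.
by [].
Qed.
End Gen.

Lemma uniq4E (T:eqType) (a b c d:T): uniq [:: a;b;c;d] = [&& a!=b, a!=c, a!=d, b!=c, b!=d & c!=d].
Proof. rewrite /= !inE !negb_or. by case: (a != b); case: (a!=c); case: (a!=d); case: (b!=c); case: (b!=d); case: (c!=d). Qed.

Lemma compl_simple (T : finType) (e : rel T) : simple_graph e -> simple_graph (compl_graph e).
Proof.
case=> Hi Hs; split; first by move=> x; rewrite /compl_graph eqxx.
by move=> x y; rewrite /compl_graph eq_sym Hs.
Qed.

Lemma ncE (T : finType) (e : rel T) x y : x != y -> ~~ compl_graph e x y -> e x y.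
Proof. by rewrite /compl_graph => ->; rewrite /= negbK. Qed.

Lemma cE (T : finType) (e : rel T) x y : compl_graph e x y -> ~~ e x y.
Proof. by case/andP. Qed.

Lemma compl_threshold (T : finType) (e : rel T) : simple_graph e -> threshold e ->
  threshold (compl_graph e).
Proof.
case=> Hi Hs [H2 [H4 HP]]; split; [|split].
- case=> a [b [c [d [U [ab [cd [ac [ad [bc bd]]]]]]]]].
  move: U; rewrite uniq4E => /and5P [nab nac nad nbc /andP [nbd ncd]].
  apply: H4; exists a, c, b, d; rewrite uniq4E.
  rewrite nac nab nad eq_sym nbc ncd nbd /=.
  split; first by [].
  split; first exact: ncE ac.
  split; first by rewrite Hs; exact: ncE bc.
  split; first exact: ncE bd.
  split; first by rewrite Hs; exact: ncE ad.
  split; [exact: cE ab | exact: cE cd].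
- case=> a [b [c [d [U [ab [bc [cd [da [ac bd]]]]]]]]].
  move: U; rewrite uniq4E => /and5P [nab nac nad nbc /andP [nbd ncd]].
  apply: H2; exists a, c, b, d; rewrite uniq4E.
  rewrite nac nab nad eq_sym nbc ncd nbd /=.
  split; first by [].
  split; first exact: ncE ac.
  split; first exact: ncE bd.
  split; first exact: cE ab.
  split; first by rewrite Hs; exact: cE da.
  split; [rewrite Hs; exact: cE bc | exact: cE cd].
- case=> a [b [c [d [U [ab [bc [cd [ac [bd ad]]]]]]]]].
  move: U; rewrite uniq4E => /and5P [nab nac nad nbc /andP [nbd ncd]].
  apply: HP; exists c, a, d, b; rewrite uniq4E.
  rewrite eq_sym nac ncd eq_sym nbc nad nab eq_sym nbd /=.
  split; first by [].
  split; first by rewrite Hs; exact: ncE ac.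
  split; first exact: ncE ad.
  split; first by rewrite Hs; exact: ncE bd.
  split; first exact: cE cd.
  split; [exact: cE ab | rewrite Hs; exact: cE bc].
Qed.

Definition nb (T : finType) (e : rel T) v p := (p == v) || e v p.

Definition es_b (T : finType) (e : rel T) (s : seq T) : bool :=
  all (fun x => all (fun y => e x y ==> has (fun v =>
    [&& all (fun p => all (fun q => [&& nb e v p, nb e v q & p != q] ==> e p q) s) s,
        nb e v x & nb e v y]) s) s) s.

Lemma es_bP (T : finType) (e : rel T) s : (forall x, x \in s) -> es_b e s -> edge_simplicial e.
Proof.
move=> Hs /allP H x y exy.
move: (H x (Hs x)) => /allP /(_ y (Hs y)); rewrite exy /= => /hasP [v _ /and3P [C xv yv]].
exists (closed_nbhd e v); split; last by rewrite !inE.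
split; last by exists v.
move=> p q; rewrite !inE => pv qv pq.
move/allP: C => /(_ p (Hs p)) /allP /(_ q (Hs q)).
by rewrite /nb pv qv pq.
Qed.

Definition ex_edge (i j : nat) : bool :=
  ((i, j) \in [:: (0,1); (0,2); (0,4); (1,2); (1,3)])%N.

Definition ex_e : rel 'I_5 := fun x y => ex_edge x y || ex_edge y x.

Definition ord5 : seq 'I_5 :=
  [:: @Ordinal 5 0 isT; @Ordinal 5 1 isT; @Ordinal 5 2 isT; @Ordinal 5 3 isT; @Ordinal 5 4 isT].

Lemma ord5P x : x \in ord5.
Proof. by case: x => [[|[|[|[|[|n]]]]] Hn]. Qed.

Theorem corollary33 :
  (forall (T : finType) (e : rel T), simple_graph e -> threshold e ->
      edge_simplicial e /\ co_edge_simplicial e) /\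
  (exists (T : finType) (e : rel T), simple_graph e /\
      edge_simplicial e /\ co_edge_simplicial e /\ ~ threshold e).
Proof.
split.
  move=> T e Hs Ht; split; first exact: es.
  exact: (es (compl_simple Hs) (compl_threshold Hs Ht)).
exists ('I_5 : finType), ex_e.
split; first by split; [move=> x; rewrite /ex_e orbb; case: x => [[|[|[|[|[|n]]]]] Hn] |
  move=> x y; rewrite /ex_e orbC].
split; first by apply: (es_bP (s := ord5)); [exact: ord5P | vm_compute].
split; first by apply: (es_bP (s := ord5)); [exact: ord5P | vm_compute].
case=> _ [_ HP]; apply: HP.
exists (@Ordinal 5 4 isT), (@Ordinal 5 0 isT), (@Ordinal 5 1 isT), (@Ordinal 5 3 isT).
by repeat split.
Qed.
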